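(* Let $f:\{0,1\}^n\to\{\pm1\}$ be $k$-monotone. Then $\sum_{r=0}^{n-1}\mathbf I[f|_r]\le kn$.
   Context: A function $g:\{0,1\}^n\to\{0,1\}$ is monotone if $x\preceq y$ coordinatewise implies $g(x)\le g(y)$; it is $k$-monotone if it is the XOR of $k$ monotone functions. $f:\{0,1\}^n\to\{\pm1\}$ is $k$-monotone if $(1-f)/2$ is $k$-monotone. For $0\le r\le n$, $\binom{[n]}{r}=\{x\in\{0,1\}^n:\sum_ix_i=r\}$ with the uniform distribution and $f|_r$ is the restriction of $f$ to it. For $g:\binom{[n]}{r}\to\{\pm1\}$ and $i,j\in[n]$, $\mathbf I_{ij}[g]=2\Pr_x[g(x^{(i,j)})\ne g(x)]$, where $x$ is uniform on the slice and $x^{(i,j)}$ is $x$ with coordinates $i$ and $j$ swapped; the total influence is $\mathbf I[g]=\frac1n\sum_{1\le i<j\le n}\mathbf I_{ij}[g]$. *)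

(* Defs.v *)
From HB Require Import structures.
From mathcomp Require Import all_boot all_order all_algebra.
From mathcomp Require Import fingroup perm.
Set Implicit Arguments. Unset Strict Implicit. Unset Printing Implicit Defensive.
Import Order.TTheory GRing.Theory Num.Theory.
Local Open Scope ring_scope.

(* The hypercube {0,1}^n : points are functions 'I_n -> bool (true = 1). *)
Definition cube (n : nat) := {ffun 'I_n -> bool}.

Definition cube_le n (x y : cube n) : Prop := forall i, x i ==> y i.

Definition monotone_fn n (g : cube n -> bool) : Prop :=
  forall x y : cube n, cube_le x y -> g x ==> g y.

Definition k_monotone n (k : nat) (g : cube n -> bool) : Prop :=
  exists gs : 'I_k -> cube n -> bool,
    (forall j, monotone_fn (gs j)) /\
    (forall x, g x = \big[addb/false]_(j < k) gs j x).

Definition pm_k_monotone n (k : nat) (f : cube n -> rat) : Prop :=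
  k_monotone k (fun x => (1 - f x) / 2 == 1).

Definition weight n (x : cube n) : nat := #|[set i | x i]|.
Definition slice n (r : nat) : {set cube n} := [set x | weight x == r].

Definition swapij n (i j : 'I_n) (x : cube n) : cube n :=
  [ffun l => x (tperm i j l)].

Definition infl_ij n (f : cube n -> rat) (r : nat) (i j : 'I_n) : rat :=
  2 * (#|[set x in slice n r | f (swapij i j x) != f x]|%:R / #|slice n r|%:R).

Definition total_infl n (f : cube n -> rat) (r : nat) : rat :=
  n%:R^-1 * \sum_(i < n) \sum_(j < n | (i < j)%N) infl_ij f r i j.

(* Main.v *)
Require Import Defs.
From HB Require Import structures.
From mathcomp Require Import all_boot all_order all_algebra.
From mathcomp Require Import fingroup perm.
From mathcomp Require Import ring zify.
Import Order.TTheory GRing.Theory Num.Theory.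
Local Open Scope ring_scope.
Set Implicit Arguments. Unset Strict Implicit.

Definition flip n (a : 'I_n) (x : cube n) : cube n :=
  [ffun l => if l == a then ~~ x l else x l].

Lemma flipK n (a : 'I_n) : involutive (flip a).
Proof. by move=> x; apply/ffunP=> l; rewrite !ffunE; case: eqP => // _; rewrite negbK. Qed.

Lemma flip_inj n (a : 'I_n) : injective (flip a).
Proof. exact: inv_inj (@flipK n a). Qed.

Lemma flip_at n (a : 'I_n) (x : cube n) : flip a x a = ~~ x a.
Proof. by rewrite ffunE eqxx. Qed.

Lemma flip_ne n (a : 'I_n) (x : cube n) l : l != a -> flip a x l = x l.
Proof. by rewrite ffunE => /negbTE ->. Qed.

Lemma weight_up n (a : 'I_n) (x : cube n) : ~~ x a -> weight (flip a x) = (weight x).+1.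
Proof.
move=> xa; rewrite /weight.
have -> : [set i | flip a x i] = a |: [set i | x i].
  apply/setP=> i; rewrite !inE ffunE; by case: eqP => [->|] //=; rewrite ?(negbTE xa).
by rewrite cardsU1 inE xa.
Qed.

Lemma weight_down n (a : 'I_n) (x : cube n) : x a -> weight (flip a x) = (weight x).-1.
Proof.
move=> xa; rewrite /weight.
have -> : [set i | flip a x i] = [set i | x i] :\ a.
  apply/setP=> i; rewrite !inE ffunE; by case: eqP => [->|] //=; rewrite ?xa.
by rewrite [in RHS](cardsD1 a) inE xa.
Qed.

Lemma weight_pos n (a : 'I_n) (x : cube n) : x a -> (0 < weight x)%N.
Proof. by move=> xa; rewrite /weight (cardsD1 a) inE xa. Qed.

Lemma weight_le n (x : cube n) : (weight x <= n)%N.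
Proof. by rewrite /weight; apply: leq_trans (max_card _) _; rewrite card_ord. Qed.

Lemma weight_sum n (x : cube n) : (\sum_(i < n) (x i : nat))%N = weight x.
Proof.
rewrite /weight -sum1_card [in RHS]big_mkcond /=; apply: eq_bigr => i _.
by rewrite inE; case: (x i).
Qed.

Lemma sum_flip n (a : 'I_n) (F : cube n -> nat) :
  (\sum_x F x = \sum_x F (flip a x))%N.
Proof. exact: (reindex_inj (@flip_inj n a)). Qed.

Lemma swap_flip n (i j : 'I_n) (x : cube n) : x i -> ~~ x j ->
  swapij i j x = flip i (flip j x).
Proof.
move=> xi xj; have ij : i != j by apply/eqP=> e; by rewrite -e xi in xj.
apply/ffunP=> l; rewrite !ffunE.
case: tpermP => [->|->|/eqP li /eqP lj].
- by rewrite eqxx (negbTE ij) xi (negbTE xj).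
- by rewrite eqxx [j == i]eq_sym (negbTE ij) xi xj.
- by rewrite (negbTE li) (negbTE lj).
Qed.

Lemma swap_same n (i j : 'I_n) (x : cube n) : x i = x j -> swapij i j x = x.
Proof.
move=> e; apply/ffunP=> l; rewrite !ffunE.
by case: tpermP => [->|->|] //.
Qed.

Definition cw n m := (m`! * (n - m.+1)`!)%N.

Lemma cw_step n m : (m <= n)%N ->
  (cw n m.-1 * m <= cw n m * (n - m) + (m == n) * n`!)%N.
Proof.
rewrite /cw; case: m => [|m] hm; first by rewrite muln0.
rewrite /= factS.
have [e|lt] := eqVneq m.+1 n.
  by rewrite -e subnn fact0 muln0 add0n mul1n muln1 factS mulnC.
have lt2 : (m.+1 < n)%N by rewrite ltn_neqAle lt hm.
rewrite mul0n addn0.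
have -> : (n - m.+1 = (n - m.+2).+1)%N by rewrite subnSK.
rewrite factS; apply: eq_leq.
rewrite subnSK //. ring.
Qed.

Lemma sum_not n (x : cube n) : (\sum_(a < n) (~~ x a : nat) = n - weight x)%N.
Proof.
apply: (@addnI (weight x)); rewrite subnKC ?weight_le // -weight_sum.
rewrite -big_split /=.
rewrite (eq_bigr (fun _ => 1%N)); last by move=> a _; case: (x a).
by rewrite sum1_card card_ord.
Qed.

Lemma full_unique n : (\sum_(w : cube n) (weight w == n) <= 1)%N.
Proof.
rewrite (@leq_trans (\sum_(w : cube n) (w == [ffun => true]))) //.
  apply: leq_sum => w _; case e: (weight w == n) => //; rewrite lt0b.
  apply/eqP/ffunP => i; rewrite ffunE.
  have : [set i | w i] = setT.
    by apply/eqP; rewrite eqEcard subsetT cardsT card_ord; move: e; rewrite /weight => /eqP ->; rewrite leqnn.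
  by move/setP/(_ i); rewrite !inE.
by rewrite (bigD1 [ffun => true]) //= eqxx big1 // => w /negbTE ->.
Qed.

Lemma mono_bound n (h : cube n -> bool) : monotone_fn h ->
  (\sum_(x : cube n) \sum_(a < n)
     (~~ x a && (h (flip a x) != h x)) * cw n (weight x) <= n`!)%N.
Proof.
move=> hm.
set S := (\sum_(x : cube n) _)%N.
have eq1 : (S + \sum_(x : cube n) \sum_(a < n) (~~ x a) * cw n (weight x) * h x
   = \sum_(x : cube n) \sum_(a < n) (~~ x a) * cw n (weight x) * h (flip a x))%N.
  rewrite /S -big_split; apply: eq_bigr => x _; rewrite -big_split; apply: eq_bigr => a _ /=.
  case xa: (x a) => /=; first by rewrite !mul0n.
  have le : cube_le x (flip a x).
    move=> i; case: (eqVneq i a) => [->|ia]; first by rewrite xa.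
    by rewrite flip_ne // implybb.
  move: (hm _ _ le); case: (h x); case: (h (flip a x)) => //= _; ring.
have eqR : (\sum_(x : cube n) \sum_(a < n) (~~ x a) * cw n (weight x) * h x
    = \sum_(x : cube n) h x * (cw n (weight x) * (n - weight x)))%N.
  apply: eq_bigr => x _; rewrite -big_distrl -big_distrl /= sum_not; ring.
have eqL : (\sum_(x : cube n) \sum_(a < n) (~~ x a) * cw n (weight x) * h (flip a x)
    = \sum_(x : cube n) h x * (cw n (weight x).-1 * weight x))%N.
  rewrite exchange_big /=.
  rewrite (eq_bigr (fun a => \sum_(x : cube n) (x a : nat) * cw n (weight x).-1 * h x)%N);
    last first.
    move=> a _; rewrite (sum_flip a); apply: eq_bigr => x _.
    rewrite flip_at flipK negbK; case xa: (x a) => /=; last by rewrite !mul0n.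
    by rewrite weight_down.
  rewrite exchange_big /=; apply: eq_bigr => x _.
  rewrite -big_distrl -big_distrl /= weight_sum; ring.
have key : (\sum_(x : cube n) h x * (cw n (weight x).-1 * weight x)
   <= \sum_(x : cube n) h x * (cw n (weight x) * (n - weight x)) + n`!)%N.
  apply: (@leq_trans (\sum_(x : cube n) (h x * (cw n (weight x) * (n - weight x))
            + (weight x == n) * n`!))%N).
    apply: leq_sum => x _; rewrite mulnC.
    case: (h x); last by rewrite !muln0 mul0n.
    by rewrite !muln1 mul1n cw_step // weight_le.
  rewrite big_split /= leq_add2l -big_distrl /=.
  by rewrite -[X in (_ <= X)%N]mul1n leq_mul2r full_unique orbT.
move: key; rewrite -eqL -eqR -eq1 addnC leq_add2l //.
Qed.

Definition Ed n (f : cube n -> rat) (x : cube n) (a : 'I_n) : bool :=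
  ~~ x a && (f (flip a x) != f x).

Lemma chain_bound n k (f : cube n -> rat) (hpm : forall x, f x = 1 \/ f x = -1)
  (hk : pm_k_monotone k f) :
  (\sum_(x : cube n) \sum_(a < n) Ed f x a * cw n (weight x) <= k * n`!)%N.
Proof.
case: hk => gs [hmono hxor].
have gE : forall x, ((1 - f x) / 2 == 1) = (f x == -1).
  by move=> x; case: (hpm x) => ->.
have step : forall x a, (Ed f x a <= \sum_(j < k) (~~ x a && (gs j (flip a x) != gs j x)))%N.
  move=> x a; rewrite /Ed; case xa: (x a) => //=.
  case: eqP => //= ne; rewrite lt0n; apply/negP => /eqP/eqP.
  rewrite sum_nat_eq0 => /forallP H.
  have : ((1 - f (flip a x)) / 2 == 1) = ((1 - f x) / 2 == 1).
    rewrite !hxor; apply: eq_bigr => j _.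
    by move: (H j); case: (gs j (flip a x)); case: (gs j x).
  move: ne; rewrite !gE; case: (hpm x) => ->; case: (hpm (flip a x)) => -> //;
    by move=> /(_ erefl).
apply: (@leq_trans (\sum_(x : cube n) \sum_(a < n) \sum_(j < k)
    (~~ x a && (gs j (flip a x) != gs j x)) * cw n (weight x))%N).
  apply: leq_sum => x _; apply: leq_sum => a _; rewrite -big_distrl /=.
  by rewrite leq_mul2r step orbT.
rewrite (eq_bigr (fun x : cube n => \sum_(j < k) \sum_(a < n)
    (~~ x a && (gs j (flip a x) != gs j x)) * cw n (weight x))%N); last first.
  by move=> x _; rewrite exchange_big.
rewrite exchange_big /=.
rewrite -[X in (_ <= X * _)%N]card_ord -sum1_card big_distrl /=.
apply: leq_sum => j _; rewrite mul1n.
exact: mono_bound.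
Qed.

Definition Esl n (f : cube n -> rat) r :=
  (\sum_(x : cube n | weight x == r) \sum_(a < n) Ed f x a)%N.

Lemma card_sliceP n r (P : pred (cube n)) :
  #|[set x in slice n r | P x]| = (\sum_(x : cube n | weight x == r) P x)%N.
Proof.
rewrite -sum1_card big_mkcond [RHS]big_mkcond /=; apply: eq_bigr => x _.
by rewrite !inE; case: (weight x == r); case: (P x).
Qed.

Lemma down_sum n (f : cube n -> rat) r :
  (\sum_(w : cube n | weight w == r.+1) \sum_(i < n) (w i && (f (flip i w) != f w)))%N
  = Esl f r.
Proof.
rewrite /Esl exchange_big [RHS]exchange_big /=.
apply: eq_bigr => i _; rewrite big_mkcond [RHS]big_mkcond /= (sum_flip i).
apply: eq_bigr => x _; rewrite flip_at flipK /Ed.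
case xi: (x i) => /=; first by case: ifP; case: ifP.
by rewrite weight_up ?xi // eqSS [f x == _]eq_sym.
Qed.

Lemma pair_bound n (T U : 'I_n -> 'I_n -> nat) :
  (forall i j : 'I_n, (i < j)%N -> T i j <= U i j + U j i)%N ->
  (\sum_(i < n) \sum_(j < n | (i < j)%N) T i j <= \sum_(i < n) \sum_(j < n) U i j)%N.
Proof.
move=> H.
have E1 : (\sum_(i < n) \sum_(j < n | (i < j)%N) T i j
          = \sum_(i < n) \sum_(j < n) (i < j)%N * T i j)%N.
  apply: eq_bigr => i _; rewrite big_mkcond; apply: eq_bigr => j _.
  by case: ifP => //; rewrite mul1n.
rewrite E1.
apply: (@leq_trans (\sum_(i < n) \sum_(j < n) ((i < j)%N * U i j + (i < j)%N * U j i))%N).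
  apply: leq_sum => i _; apply: leq_sum => j _.
  case: ltnP => ij; rewrite ?mul1n ?mul0n //; exact: H.
rewrite (eq_bigr (fun i : 'I_n => \sum_(j < n) (i < j)%N * U i j + \sum_(j < n) (i < j)%N * U j i)%N);
  last by move=> i _; rewrite big_split.
rewrite big_split /= [X in (_ + X <= _)%N]exchange_big /= -big_split /=.
apply: leq_sum => i _; rewrite -big_split /=; apply: leq_sum => j _.
rewrite -mulnDl; case: (ltngtP i j) => _; by rewrite ?mul1n ?mul0n.
Qed.

Lemma swapC n (i j : 'I_n) (x : cube n) : swapij i j x = swapij j i x.
Proof. by apply/ffunP => l; rewrite !ffunE tpermC. Qed.

Lemma first_sum n (f : cube n -> rat) r :
  (\sum_(i < n) \sum_(j < n) \sum_(x : cube n | weight x == r) (x i && Ed f x j)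
   = r * Esl f r)%N.
Proof.
under eq_bigr do rewrite exchange_big.
rewrite exchange_big /Esl big_distrr /=.
apply: eq_bigr => x /eqP wx.
rewrite exchange_big /=.
under eq_bigr do under eq_bigr do rewrite -mulnb.
under eq_bigr do rewrite -big_distrl /= weight_sum wx.
by rewrite big_distrr.
Qed.

Lemma others n (w : cube n) (i : 'I_n) : w i ->
  (\sum_(j < n) (w j && (j != i)) = (weight w).-1)%N.
Proof.
move=> wi; rewrite -weight_sum [in RHS](bigD1 i) //= wi add1n /=.
by rewrite [RHS]big_mkcond; apply: eq_bigr => j _; rewrite andbC; case: (j != i).
Qed.

Lemma second_sum n (f : cube n -> rat) r :
  (\sum_(i < n) \sum_(j < n) \sum_(x : cube n | weight x == r)
     (x i && ~~ x j && (f (flip i (flip j x)) != f (flip j x)))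
   = r * Esl f r)%N.
Proof.
rewrite exchange_big /=.
under eq_bigr do rewrite exchange_big /=.
have step : forall j : 'I_n,
  (\sum_(x : cube n | weight x == r) \sum_(i < n)
     (x i && ~~ x j && (f (flip i (flip j x)) != f (flip j x)))
  = \sum_(w : cube n | weight w == r.+1) w j *
      \sum_(i < n) (w i && (i != j) && (f (flip i w) != f w)))%N.
  move=> j; rewrite big_mkcond [RHS]big_mkcond /= (sum_flip j).
  apply: eq_bigr => w _; rewrite flipK flip_at negbK.
  case wj: (w j); last first.
    rewrite mul0n; case: ifP => _; last by case: ifP.
    by rewrite big1 ?if_same // => i _; rewrite andbF.
  rewrite /= mul1n weight_down // -(prednK (weight_pos wj)) eqSS /=.
  case: ifP => // _; apply: eq_bigr => i _; rewrite andbT.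
  case: (eqVneq i j) => [->|ij]; first by rewrite flip_at wj.
  by rewrite flip_ne //= andbT.
under eq_bigr do rewrite step.
rewrite exchange_big /= -down_sum big_distrr /=.
apply: eq_bigr => w /eqP ww.
under eq_bigr do rewrite big_distrr /=.
rewrite exchange_big /= big_distrr /=; apply: eq_bigr => i _.
have -> : (\sum_(j < n) w j * (w i && (i != j) && (f (flip i w) != f w))
   = (w i && (f (flip i w) != f w)) * \sum_(j < n) (w j && (j != i)))%N.
  rewrite big_distrr /=; apply: eq_bigr => j _.
  by rewrite eq_sym; case: (w i); case: (w j); case: (j != i); case: (_ != _).
case wi: (w i) => /=; last by rewrite !mul0n muln0.
by rewrite others // ww /= mulnC.
Qed.

Lemma slice_bound n (f : cube n -> rat) r :
  (\sum_(i < n) \sum_(j < n | (i < j)%N)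
      #|[set x in slice n r | f (swapij i j x) != f x]| <= 2 * r * Esl f r)%N.
Proof.
pose U (i j : 'I_n) := (\sum_(x : cube n | weight x == r)
   (x i && ~~ x j && (f (swapij i j x) != f x)))%N.
apply: (@leq_trans (\sum_(i < n) \sum_(j < n) U i j)%N).
  apply: pair_bound => i j _; rewrite card_sliceP /U -big_split /=.
  apply: leq_sum => x _.
  case xi: (x i); case xj: (x j) => /=.
  - by rewrite swap_same ?xi ?xj // eqxx.
  - by rewrite addn0.
  - by rewrite swapC.
  - by rewrite swap_same ?xi ?xj // eqxx.
apply: (@leq_trans (\sum_(i < n) \sum_(j < n) \sum_(x : cube n | weight x == r)
   ((x i && Ed f x j) + (x i && ~~ x j && (f (flip i (flip j x)) != f (flip j x)))))%N).
  apply: leq_sum => i _; apply: leq_sum => j _; apply: leq_sum => x _.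
  case xi: (x i); case xj: (x j) => //=.
  rewrite swap_flip ?xi ?xj // /Ed.
  case: (eqVneq (f (flip i (flip j x))) (f x)) => [->|ne] //=.
  rewrite xj /=.
  case: (eqVneq (f (flip j x)) (f x)) => [e|ne2] //=.
  by rewrite e ne.
under eq_bigr do under eq_bigr do rewrite big_split /=.
under eq_bigr do rewrite big_split /=.
rewrite big_split /= first_sum second_sum.
by rewrite mul2n -addnn mulnDl.
Qed.

Lemma card_slice n r : #|slice n r| = 'C(n, r).
Proof.
pose phi (x : cube n) := [set i | x i].
have phi_inj : injective phi.
  move=> x y e; apply/ffunP => i; move: e; rewrite /phi => /setP /(_ i); by rewrite !inE.
rewrite -(card_imset _ phi_inj).
have -> : phi @: slice n r = [set A : {set 'I_n} | #|A| == r].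
  apply/setP => A; rewrite inE; apply/imsetP/idP.
    by move=> [x]; rewrite inE => hx ->.
  move=> hA; exists [ffun i => i \in A].
    rewrite inE /weight; suff -> : [set i | [ffun i => i \in A] i] = A by [].
    by apply/setP => i; rewrite !inE ffunE.
  by apply/setP => i; rewrite !inE ffunE.
by rewrite card_draws card_ord.
Qed.

Lemma sum_slices n (f : cube n -> rat) :
  (\sum_(r < n) Esl f r * cw n r
   <= \sum_(x : cube n) \sum_(a < n) Ed f x a * cw n (weight x))%N.
Proof.
rewrite (partition_big (fun x : cube n => (inord (weight x) : 'I_n.+1)) xpredT) //=.
rewrite big_ord_recr /= -[X in (X <= _)%N]addn0 leq_add //.
apply: eq_leq; apply: eq_bigr => r _; rewrite /Esl big_distrl /=.
apply: eq_big => [x|x /eqP wx]; first by rewrite -val_eqE /= inordK ?ltnS ?weight_le.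
by rewrite big_distrl /= wx.
Qed.

Lemma frac_le (a b p q : nat) : (0 < b)%N -> (0 < q)%N -> (a * q <= p * b)%N ->
  (a%:R / b%:R <= p%:R / q%:R :> rat).
Proof.
move=> b0 q0 h.
rewrite ler_pdivrMr ?ltr0n // mulrAC ler_pdivlMr ?ltr0n //.
by rewrite -!natrM ler_nat.
Qed.

Lemma infl_eq n (f : cube n -> rat) r :
  total_infl f r =
  (2 * \sum_(i < n) \sum_(j < n | (i < j)%N)
      #|[set x in slice n r | f (swapij i j x) != f x]|)%:R / (n * #|slice n r|)%:R.
Proof.
rewrite /total_infl /infl_ij natrM natr_sum mulr_sumr natrM invfM.
rewrite [RHS]mulrC [RHS]mulrA [RHS]mulr_sumr; apply: eq_bigr => i _.
rewrite natr_sum !mulr_sumr; apply: eq_bigr => j _.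
ring.
Qed.

Lemma nat_key (n r S E : nat) : (r < n)%N -> (S <= 2 * r * E)%N ->
  (2 * S * (n - r) <= n * n * E)%N.
Proof.
move=> rn hS.
have [d ->] : exists d, n = (r + d)%N by exists (n - r)%N; rewrite subnKC // ltnW.
rewrite addKn.
have h4 : (4 * r * d <= (r + d) * (r + d))%N.
  case: (leqP r d) => h.
    have [e ->] : exists e, d = (r + e)%N by exists (d - r)%N; rewrite subnKC.
    nia.
  have [e ->] : exists e, r = (d + e)%N by exists (r - d)%N; rewrite subnKC // ltnW.
  nia.
apply: (@leq_trans (2 * (2 * r * E) * d)%N).
  by rewrite leq_mul2r leq_mul2l hS !orbT.
apply: (@leq_trans (E * (4 * r * d))%N); first by apply: eq_leq; ring.
by rewrite [X in (_ <= X)%N]mulnC leq_mul2l h4 orbT.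
Qed.

Theorem proposition1 (n k : nat) (f : cube n -> rat)
  (hpm : forall x, f x = 1 \/ f x = -1)
  (hk : pm_k_monotone k f) :
  \sum_(r < n) total_infl f r <= (k * n)%:R.
Proof.
apply: (@le_trans _ _ (\sum_(r < n) (n * (Esl f r * cw n r))%:R / (n`!)%:R)).
  apply: ler_sum => r _; rewrite infl_eq card_slice.
  have rn := ltn_ord r.
  have n0 : (0 < n)%N by apply: leq_ltn_trans rn.
  have C0 : (0 < 'C(n, r))%N by rewrite bin_gt0 ltnW.
  apply: frac_le; rewrite ?muln_gt0 ?n0 ?fact_gt0 //.
  have fe : n`! = ('C(n, r) * (cw n r * (n - r)))%N.
    rewrite -(bin_fact (ltnW rn)) /cw; congr (_ * _).
    rewrite -subnSK // factS; ring.
  rewrite fe.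
  have := nat_key rn (slice_bound f r).
  set S := (\sum_(i < n) _)%N; set E := Esl f r.
  move=> h.
  have -> : (2 * S * ('C(n, r) * (cw n r * (n - r)))
           = (2 * S * (n - r)) * ('C(n, r) * cw n r))%N by ring.
  have -> : (n * (E * cw n r) * (n * 'C(n, r)) = (n * n * E) * ('C(n, r) * cw n r))%N by ring.
  by rewrite leq_mul2r h orbT.
rewrite -mulr_suml -natr_sum -big_distrr /=.
have := leq_trans (sum_slices f) (chain_bound hpm hk).
set T := (\sum_(r < n) _)%N => hT.
rewrite ler_pdivrMr ?ltr0n ?fact_gt0 // -natrM ler_nat.
by rewrite [(k * n)%N]mulnC -mulnA leq_mul2l hT orbT.
Qed.
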